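(* Let $\mathcal{K}_1$ be an $\mathcal{ALCP}$ knowledge base over $(\mathcal{L}^1,N_C^1,N_R^1)$ and $\mathcal{K}_2$ one over $(\mathcal{L}^2,N_C^2,N_R^2)$, both ME-consistent. If $\mathcal{K}_1=\mathcal{K}_2$, $\mathcal{L}^1\subseteq\mathcal{L}^2$, $N_C^1\subseteq N_C^2$ and $N_R^1\subseteq N_R^2$, then for all concepts $C,D$ built over $N_C^1,N_R^1$ and all contexts $\kappa\in\mathcal{L}^1$, $\mathcal{B}_{\mathcal{K}_1}(C\sqsubseteq D\mid\kappa)=\mathcal{B}_{\mathcal{K}_2}(C\sqsubseteq D\mid\kappa)$, where each belief interval is computed with respect to the respective language.
   Context: For a propositional language $\mathcal{L}$ over a finite set $\mathrm{sig}(\mathcal{L})$ of variables, $\mathrm{Int}(\mathcal{L})$ is the set of truth assignments; $\mathcal{L}^1\subseteq\mathcal{L}^2$ means $\mathrm{sig}(\mathcal{L}^1)\subseteq\mathrm{sig}(\mathcal{L}^2)$. A probability distribution over $\mathcal{L}$ is $P:\mathrm{Int}(\mathcal{L})\to[0,1]$ summing to $1$, with $P(\phi)=\sum_{v\models\phi}P(v)$. A probabilistic constraint is $c_0+\sum_{i=1}^k c_i\,\mathsf{p}(\phi_i)\ge 0$ ($c_i\in\mathbb{R}$, $\phi_i\in\mathcal{L}$), satisfied by $P$ iff $c_0+\sum_ic_iP(\phi_i)\ge0$; $\mathrm{Mod}(\mathcal{R})$ is the set of distributions over $\mathcal{L}$ satisfying all constraints in $\mathcal{R}$; for consistent $\mathcal{R}$,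 $P^{ME}_{\mathcal{R}}$ is the unique maximizer in $\mathrm{Mod}(\mathcal{R})$ of $H(P)=-\sum_vP(v)\log P(v)$. Concepts over concept names $N_C$ and role names $N_R$: $C::=A\mid\neg C\mid C\sqcap C\mid\exists r.C$. An $\mathcal{L}$-GCI is $\langle C\sqsubseteq D:\kappa\rangle$, $\kappa\in\mathcal{L}$; an $\mathcal{L}$-TBox is a finite set of them; a KB over $(\mathcal{L},N_C,N_R)$ is $\mathcal{K}=(\mathcal{R},\mathcal{T})$ with constraints over $\mathcal{L}$ and GCIs using these symbols. A possible world $\mathcal{I}=(\Delta^{\mathcal{I}},\cdot^{\mathcal{I}},v^{\mathcal{I}})$ is a classical $\mathcal{ALC}$ interpretation of $N_C,N_R$ together with $v^{\mathcal{I}}\in\mathrm{Int}(\mathcal{L})$; it models $\langle C\sqsubseteq D:\kappa\rangle$ iff $v^{\mathcal{I}}\not\models\kappa$ or $C^{\mathcal{I}}\subseteq D^{\mathcal{I}}$. An $\mathcal{ALCP}$-interpretation $\mathcal{P}=(\mathfrak{I},P_{\mathfrak{I}})$ is a nonempty finite set of possible worlds with a probability distribution on it; $P^{\mathcal{P}}(v)=\sum_{\mathcal{I}\in\mathfrak{I},v^{\mathcal{I}}=v}P_{\mathfrak{I}}(\mathcal{I})$. $\mathcal{P}$ is an ME-$\mathcal{ALCP}$-model of $\mathcal{K}$ iff all its worlds model every GCI of $\mathcal{T}$ and $P^{\mathcal{P}}=P^{ME}_{\mathcal{R}}$; $\mathrm{Mod}_{ME}(\mathcal{K})$ is the set of these;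 $\mathcal{K}$ is ME-consistent iff it is nonempty. $\Pr_{\mathcal{P}}(C\sqsubseteq D\mid\kappa)=\big(\sum_{\mathcal{I}\in\mathfrak{I},v^{\mathcal{I}}\models\kappa,C^{\mathcal{I}}\subseteq D^{\mathcal{I}}}P_{\mathfrak{I}}(\mathcal{I})\big)/\big(\sum_{\mathcal{I}\in\mathfrak{I},v^{\mathcal{I}}\models\kappa}P_{\mathfrak{I}}(\mathcal{I})\big)$. The belief interval $\mathcal{B}_{\mathcal{K}}(C\sqsubseteq D\mid\kappa)=[\mathcal{B}^{s}_{\mathcal{K}},\mathcal{B}^{c}_{\mathcal{K}}]$ has as endpoints the infimum and supremum of $\Pr_{\mathcal{P}}(C\sqsubseteq D\mid\kappa)$ over $\mathcal{P}\in\mathrm{Mod}_{ME}(\mathcal{K})$. *)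

(* Defs.v *)
From HB Require Import structures.
From mathcomp Require Import all_boot all_order all_algebra.
From mathcomp Require Import finmap.
From Stdlib Require List.
From mathcomp Require Import all_classical all_reals all_analysis.

Set Implicit Arguments.
Unset Strict Implicit.
Unset Printing Implicit Defensive.

Import Order.TTheory GRing.Theory Num.Theory.
Local Open Scope classical_set_scope.
Local Open Scope ring_scope.

(* Propositional variables are natural numbers; a language L is given by its
   finite signature sig(L) : {fset nat}.  Int(L) = {ffun sig -> bool}. *)

Inductive pform : Type :=
  | FVar of nat
  | FTop
  | FNeg of pform
  | FAnd of pform & pform
  | FOr of pform & pform.

Fixpoint fvars (phi : pform) : seq nat :=
  match phi with
  | FVar x => [:: x]
  | FTop => [::]
  | FNeg p => fvars p
  | FAnd p q => fvars p ++ fvars q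
  | FOr p q => fvars p ++ fvars q
  end.

Definition form_in (sig : {fset nat}) (phi : pform) : bool :=
  all (fun x => x \in sig) (fvars phi).

Fixpoint feval (f : nat -> bool) (phi : pform) : bool :=
  match phi with
  | FVar x => f x
  | FTop => true
  | FNeg p => ~~ feval f p
  | FAnd p q => feval f p && feval f q
  | FOr p q => feval f p || feval f q
  end.

(* an interpretation of L, extended (irrelevantly) by false outside sig(L) *)
Definition asg (sig : {fset nat}) (v : {ffun sig -> bool}) (x : nat) : bool :=
  match (insub x : option sig) with Some y => v y | None => false end.

Definition models (sig : {fset nat}) (v : {ffun sig -> bool}) (phi : pform) :=
  feval (asg v) phi.

Section Prob.
Variable R : realType.

Definition is_dist (sig : {fset nat}) (P : {ffun sig -> bool} -> R) : Prop :=
  (forall v, 0 <= P v) /\ \sum_v P v = 1.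

Definition probf (sig : {fset nat}) (P : {ffun sig -> bool} -> R) (phi : pform) : R :=
  \sum_(v | models v phi) P v.

Record pcon := PCon { pc0 : R; pterms : seq (R * pform) }.

Definition pcon_in (sig : {fset nat}) (c : pcon) : bool :=
  all (fun t => form_in sig t.2) (pterms c).

Definition sat_pcon (sig : {fset nat}) (P : {ffun sig -> bool} -> R) (c : pcon) : Prop :=
  0 <= pc0 c + \sum_(t <- pterms c) t.1 * probf P t.2.

Definition ModR (sig : {fset nat}) (Rs : seq pcon) (P : {ffun sig -> bool} -> R) : Prop :=
  is_dist P /\ (forall c, List.In c Rs -> sat_pcon P c).

(* H(P) = - sum_v P(v) log P(v)   (ln 0 = 0 in mathcomp-analysis, so 0 log 0 = 0) *)
Definition entropy (sig : {fset nat}) (P : {ffun sig -> bool} -> R) : R :=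
  - \sum_v P v * ln (P v).

Definition is_ME (sig : {fset nat}) (Rs : seq pcon) (P : {ffun sig -> bool} -> R) : Prop :=
  ModR Rs P /\ (forall Q : {ffun sig -> bool} -> R, ModR Rs Q -> entropy Q <= entropy P).

End Prob.

Inductive concept : Type :=
  | CName of nat
  | CNeg of concept
  | CAnd of concept & concept
  | CEx of nat & concept.

Fixpoint cnames (C : concept) : seq nat :=
  match C with
  | CName A => [:: A]
  | CNeg C => cnames C
  | CAnd C D => cnames C ++ cnames D
  | CEx _ C => cnames C
  end.

Fixpoint rnames (C : concept) : seq nat :=
  match C with
  | CName _ => [::]
  | CNeg C => rnames C
  | CAnd C D => rnames C ++ rnames D
  | CEx r C => r :: rnames C
  end.

Definition concept_over (NC NR : {fset nat}) (C : concept) : bool :=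
  all (fun A => A \in NC) (cnames C) && all (fun r => r \in NR) (rnames C).

Record gci := GCI { glhs : concept; grhs : concept; gctx : pform }.

Definition gci_over (sig NC NR : {fset nat}) (g : gci) : bool :=
  [&& concept_over NC NR (glhs g), concept_over NC NR (grhs g) & form_in sig (gctx g)].

Definition kb (R : realType) := (seq (pcon R) * seq gci)%type.

Definition kb_over (R : realType) (sig NC NR : {fset nat}) (K : kb R) : bool :=
  all (pcon_in sig) K.1 && all (gci_over sig NC NR) K.2.

(* A classical ALC interpretation of N_C, N_R (nonempty domain) together with
   an interpretation of L. *)
Record world (sig NC NR : {fset nat}) := World {
  dom : Type;
  dom_elt : dom;
  cint : NC -> set dom;
  rint : NR -> dom -> dom -> Prop;
  wval : {ffun sig -> bool} }.

Section Ext.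
Variables (sig NC NR : {fset nat}) (w : world sig NC NR).

Fixpoint cext (C : concept) : set (dom w) :=
  match C with
  | CName A => match (insub A : option NC) with Some a => @cint sig NC NR w a | None => set0 end
  | CNeg C => ~` cext C
  | CAnd C D => cext C `&` cext D
  | CEx r C => match (insub r : option NR) with
               | Some s => [set x | exists y, @rint sig NC NR w s x y /\ cext C y]
               | None => set0
               end
  end.
End Ext.
Arguments cext {sig NC NR} w C.

Definition world_models_gci (sig NC NR : {fset nat}) (w : world sig NC NR) (g : gci) : Prop :=
  ~~ models (wval w) (gctx g) \/ cext w (glhs g) `<=` cext w (grhs g).

(* A nonempty finite set of possible worlds with a probability distribution on
   it, represented as a list of (world, probability) pairs. *)
Section ALCP.
Variable R : realType.
Variables sig NC NR : {fset nat}.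

Definition alcp := seq (world sig NC NR * R).

Definition is_alcp (W : alcp) : Prop :=
  W <> [::] /\ (forall p, List.In p W -> 0 <= p.2) /\ \sum_(p <- W) p.2 = 1.

Definition alcp_dist (W : alcp) (v : {ffun sig -> bool}) : R :=
  \sum_(p <- W | wval p.1 == v) p.2.

Definition ME_model (K : kb R) (W : alcp) : Prop :=
  is_alcp W /\
  (forall p g, List.In p W -> List.In g K.2 -> world_models_gci p.1 g) /\
  is_ME K.1 (alcp_dist W).

Definition ME_consistent (K : kb R) : Prop := exists W, ME_model K W.

Definition Prc (W : alcp) (C D : concept) (kappa : pform) : R :=
  (\sum_(p <- W | models (wval p.1) kappa && `[< cext p.1 C `<=` cext p.1 D >]) p.2) /
  (\sum_(p <- W | models (wval p.1) kappa) p.2).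

Definition belief_values (K : kb R) (C D : concept) (kappa : pform) : set R :=
  [set x | exists W, ME_model K W /\ x = Prc W C D kappa].

Definition belief_lo (K : kb R) C D kappa : R := inf (belief_values K C D kappa).
Definition belief_hi (K : kb R) C D kappa : R := sup (belief_values K C D kappa).

End ALCP.

(* Main.v *)
Require Import Defs.
From HB Require Import structures.
From mathcomp Require Import all_boot all_order all_algebra.
From mathcomp Require Import finmap.
From mathcomp Require Import all_classical all_reals all_analysis.
From mathcomp Require Import ring lra.
From Stdlib Require List.
Set Implicit Arguments.
Unset Strict Implicit.
Unset Printing Implicit Defensive.
Import Order.TTheory GRing.Theory Num.Theory.
Local Open Scope ring_scope.

Lemma gibbs (R : realType) (I : finType) (A : pred I) (a : I -> R) :
  (forall i, 0 <= a i) -> (0 < #|A|)%N ->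
  - \sum_(i in A) a i * ln (a i) <=
  - (\sum_(i in A) a i) * ln (\sum_(i in A) a i) + (\sum_(i in A) a i) * ln (#|A|%:R).
Proof.
move=> a0 nA.
set s := \sum_(i in A) a i; set n : R := #|A|%:R.
have n0 : 0 < n by rewrite ltr0n.
have s0 : 0 <= s by apply: sumr_ge0.
have pt : forall i, i \in A -> a i - s / n <= a i * ln (a i) - a i * ln s + a i * ln n.
  move=> i iA.
  have [->|ai] := eqVneq (a i) 0.
    rewrite !mul0r sub0r !subr0 addr0 oppr_le0; exact: divr_ge0.
  have api : 0 < a i by rewrite lt_def ai a0.
  have sa : a i <= s by rewrite /s (bigD1 i) //= lerDl sumr_ge0.
  have sp : 0 < s by apply: lt_le_trans sa.
  have yp : 0 < s / (a i * n) by rewrite divr_gt0 // mulr_gt0.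
  have H : ln (s / (a i * n)) <= s / (a i * n) - 1.
    have := @le_ln1Dx R (s / (a i * n) - 1).
    rewrite (_ : 1 + (s / (a i * n) - 1) = s / (a i * n)); last by ring.
    apply; lra.
  move: H; rewrite ln_div ?posrE ?mulr_gt0 // lnM ?posrE //.
  have -> : s / (a i * n) = (s / n) / a i by field; rewrite ?gt_eqF.
  move=> H.
  have := ler_wpM2l (ltW api) H.
  have -> : a i * (s / n / a i - 1) = s / n - a i by field; rewrite gt_eqF.
  lra.
have := @ler_sum _ _ (index_enum I) (fun i => i \in A) _ _ pt.
rewrite big_split /= sumrN sumr_const -/s big_split big_split /= sumrN -!mulr_suml -/s.
have -> : s / n *+ #|A| = s by rewrite -mulr_natr mulrAC -mulrA divff ?mulr1 // gt_eqF.
lra.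
Qed.

Lemma all_In (T : Type) (P : pred T) (s : seq T) x : all P s -> List.In x s -> P x.
Proof. elim: s => //= y s IH /andP[Py Ps] [<-|/IH]; by auto. Qed.

Lemma feval_ext (f g : nat -> bool) phi :
  (forall x, x \in fvars phi -> f x = g x) -> feval f phi = feval g phi.
Proof.
elim: phi => [x|| p IH | p IHp q IHq | p IHp q IHq] //= H.
- by apply: H; rewrite inE.
- by rewrite IH.
- by rewrite IHp ?IHq // => x xi; apply: H; rewrite mem_cat xi ?orbT.
- by rewrite IHp ?IHq // => x xi; apply: H; rewrite mem_cat xi ?orbT.
Qed.

Lemma asg_val (sig : {fset nat}) (v : {ffun sig -> bool}) (x : sig) : asg v (val x) = v x.
Proof. by rewrite /asg valK. Qed.

Section Lang.
Variable R : realType.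
Variables sig1 sig2 : {fset nat}.
Hypothesis H12 : fsubset sig1 sig2.

Definition res (v : {ffun sig2 -> bool}) : {ffun sig1 -> bool} := [ffun x : sig1 => asg v (val x)].

Lemma asg_res v x : x \in sig1 -> asg (res v) x = asg v x.
Proof.
move=> xs; rewrite {1}/asg; case: insubP => [y _ <-|]; first by rewrite ffunE.
by rewrite xs.
Qed.

Lemma models_res v phi : form_in sig1 phi -> models (res v) phi = models v phi.
Proof.
move=> /allP H; rewrite /models; apply: feval_ext => x /H; exact: asg_res.
Qed.

Definition upd (a : {ffun sig1 -> bool}) (v : {ffun sig2 -> bool}) : {ffun sig2 -> bool} :=
  [ffun x : sig2 => if (insub (val x) : option sig1) is Some y then a y else v x].

Lemma res_upd a v : res (upd a v) = a.
Proof.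
apply/ffunP => y; rewrite ffunE /asg.
have ys2 : val y \in sig2 by apply: (fsubsetP H12); exact: valP.
case: insubP => [z _ zE|]; last by rewrite ys2.
by rewrite ffunE zE valK.
Qed.

Lemma upd_res a v : res v = a -> upd a v = v.
Proof.
move=> <-; apply/ffunP => x; rewrite ffunE.
case: insubP => [y _ yE|//]; by rewrite ffunE yE asg_val.
Qed.

Lemma upd_upd b v : upd (res v) (upd b v) = v.
Proof.
apply/ffunP => x; rewrite !ffunE.
case: insubP => [y _ yE|nx]; first by rewrite ffunE yE asg_val.
by [].
Qed.

Definition fib (a : {ffun sig1 -> bool}) := [pred v : {ffun sig2 -> bool} | res v == a].

Lemma card_fib_le a b : (#|fib a| <= #|fib b|)%N.
Proof.
have -> : #|fib a| = #|[set upd b v | v in fib a]|.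
  rewrite card_in_imset // => v w; rewrite !inE => /eqP va /eqP wa E.
  by rewrite -(upd_upd b v) -(upd_upd b w) va wa E.
apply: subset_leq_card; apply/fintype.subsetP => x /imsetP[v _ ->].
by rewrite inE /= res_upd.
Qed.

Lemma card_fib a b : #|fib a| = #|fib b|.
Proof. by apply/eqP; rewrite eqn_leq !card_fib_le. Qed.

Lemma card_fib_gt0 a : (0 < #|fib a|)%N.
Proof.
apply/card_gt0P; exists (upd a [ffun => false]); by rewrite inE /= res_upd.
Qed.


Definition a0 : {ffun sig1 -> bool} := [ffun => false].
Definition N := #|fib a0|.
Lemma N_gt0 : (0 < N)%N. Proof. exact: card_fib_gt0. Qed.
Lemma NR_gt0 : 0 < (N%:R : R). Proof. by rewrite ltr0n N_gt0. Qed.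

Definition marg (Q : {ffun sig2 -> bool} -> R) (a : {ffun sig1 -> bool}) : R :=
  \sum_(v | res v == a) Q v.
Definition ext (P : {ffun sig1 -> bool} -> R) (v : {ffun sig2 -> bool}) : R :=
  P (res v) / N%:R.

Lemma sum_part (F : {ffun sig2 -> bool} -> R) :
  \sum_v F v = \sum_a \sum_(v | res v == a) F v.
Proof. by rewrite (partition_big (fun v => res v) xpredT). Qed.

Lemma sum_fib_const a (c : R) : \sum_(v | res v == a) c = c *+ N.
Proof.
rewrite /N -(card_fib a) -sumr_const; apply: eq_bigl => v; by rewrite inE.
Qed.

Lemma marg_ext P a : marg (ext P) a = P a.
Proof.
rewrite /marg /ext (eq_bigr (fun=> P a / N%:R)); last by move=> v /eqP ->.
rewrite sum_fib_const -[X in X = _]mulr_natr divfK //; exact: lt0r_neq0 NR_gt0.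
Qed.

Lemma sum_marg Q : \sum_a marg Q a = \sum_v Q v.
Proof. by rewrite sum_part. Qed.

Lemma probf_marg Q phi : form_in sig1 phi -> probf Q phi = probf (marg Q) phi.
Proof.
move=> Hphi; rewrite /probf (partition_big (fun v => res v) (fun a => models a phi)).
  apply: eq_bigr => a Ha; apply: eq_bigl => v.
  have [E|] := eqVneq (res v) a; last by rewrite andbF.
  by rewrite andbT -(models_res v Hphi) E.
by move=> v; rewrite models_res.
Qed.

Lemma dist_marg Q : is_dist Q -> is_dist (marg Q).
Proof.
move=> [Q0 Q1]; split; first by move=> a; apply: sumr_ge0.
by rewrite sum_marg.
Qed.

Lemma dist_ext P : is_dist P -> is_dist (ext P).
Proof.
move=> [P0 P1]; split; first by move=> v; rewrite /ext divr_ge0 // ler0n.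
by rewrite sum_part -P1; apply: eq_bigr => a _; exact: marg_ext.
Qed.

Lemma sat_marg Q c : pcon_in sig1 c -> (sat_pcon Q c <-> sat_pcon (marg Q) c).
Proof.
rewrite /pcon_in /sat_pcon => Hc; suff -> : \sum_(t <- pterms c) t.1 * probf Q t.2 =
   \sum_(t <- pterms c) t.1 * probf (marg Q) t.2 by [].
elim: (pterms c) Hc => [|t ts IH] /=; first by rewrite !big_nil.
by move=> /andP[Ht Hts]; rewrite !big_cons IH // (probf_marg _ Ht).
Qed.

Lemma ent_ext P : is_dist P -> entropy (ext P) = entropy P + ln N%:R.
Proof.
move=> [P0 P1]; rewrite /entropy /ext sum_part.
have nz : (N%:R : R) != 0 by exact: lt0r_neq0 NR_gt0.
transitivity (- \sum_a (P a * ln (P a) - P a * ln N%:R)).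
  congr (- _); apply: eq_bigr => a _.
  rewrite (eq_bigr (fun=> P a / N%:R * ln (P a / N%:R))); last by move=> v /eqP ->.
  rewrite sum_fib_const.
  have [->|pa] := eqVneq (P a) 0; first by rewrite !mul0r mul0rn subrr.
  have pap : 0 < P a by rewrite lt_def pa P0.
  rewrite ln_div ?posrE ?NR_gt0 // -[X in X = _]mulr_natr.
  by field.
rewrite sumrB -mulr_suml P1 mul1r; lra.
Qed.

Lemma ent_marg Q : is_dist Q -> entropy Q <= entropy (marg Q) + ln N%:R.
Proof.
move=> [Q0 Q1]; rewrite /entropy sum_part.
have H : forall a, - \sum_(v | res v == a) Q v * ln (Q v) <=
    - marg Q a * ln (marg Q a) + marg Q a * ln N%:R.
  move=> a; have := gibbs Q0 (card_fib_gt0 a).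
  have E : forall F : {ffun sig2 -> bool} -> R,
     \sum_(i in fib a) F i = \sum_(v | res v == a) F v.
    by move=> F; apply: eq_bigl => v; rewrite inE.
  by rewrite !E /N (card_fib a a0).
rewrite -sumrN; apply: le_trans (ler_sum _ (fun a _ => H a)) _.
under [X in X <= _]eq_bigr do rewrite mulNr.
rewrite big_split /= sumrN -mulr_suml sum_marg Q1 mul1r.
by []. Qed.

Lemma Mod_marg Rs Q : all (pcon_in sig1) Rs -> ModR Rs Q -> ModR Rs (marg Q).
Proof.
move=> HR [HQ HC]; split; first exact: dist_marg.
move=> c Hc; apply/(sat_marg _ (all_In HR Hc)); exact: HC.
Qed.

Lemma Mod_ext Rs P : all (pcon_in sig1) Rs -> ModR Rs P -> ModR Rs (ext P).
Proof.
move=> HR [HP HC]; split; first exact: dist_ext.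
move=> c Hc; apply/(sat_marg _ (all_In HR Hc)).
rewrite (_ : marg (ext P) = P); first exact: HC.
by apply: funext => a; exact: marg_ext.
Qed.

Lemma ME_ext Rs P : all (pcon_in sig1) Rs -> is_ME Rs P -> is_ME Rs (ext P).
Proof.
move=> HR [HP HM]; split; first exact: Mod_ext.
move=> Q HQ; have := ent_marg HQ.1; have := HM _ (Mod_marg HR HQ).
rewrite ent_ext; [lra | exact: HP.1].
Qed.

Lemma ME_marg Rs Q : all (pcon_in sig1) Rs -> is_ME Rs Q -> is_ME Rs (marg Q).
Proof.
move=> HR [HQ HM]; split; first exact: Mod_marg.
move=> P HP; have := HM _ (Mod_ext HR HP); rewrite (ent_ext HP.1).
have := ent_marg HQ.1; lra.
Qed.

End Lang.

Lemma In_cat (B : Type) (s1 s2 : seq B) y :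
  List.In y (s1 ++ s2) -> List.In y s1 \/ List.In y s2.
Proof. elim: s1 => /= [|z zs IH]; [by right | move=> [<-|/IH[]]]; auto. Qed.

Lemma In_flatten_map (A B : Type) (f : A -> seq B) (s : seq A) y :
  List.In y (flatten (map f s)) -> exists x, List.In x s /\ List.In y (f x).
Proof.
elim: s => //= x s IH H; case: (In_cat H) => [H0|/IH [x' [H1 H2]]]; first by exists x; auto.
by exists x'; auto.
Qed.

Lemma In_map (A B : Type) (f : A -> B) (s : seq A) y :
  List.In y (map f s) -> exists x, List.In x s /\ y = f x.
Proof.
elim: s => //= x s IH [<-|/IH [x' [H1 H2]]]; first by exists x; auto.
by exists x'; auto.
Qed.

Lemma In_mem (T : eqType) (s : seq T) x : List.In x s -> x \in s.
Proof. elim: s => //= y s IH [->|/IH H]; by rewrite inE ?eqxx ?H ?orbT. Qed.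

Section Worlds.
Variable R : realType.
Variables sig1 NC1 NR1 sig2 NC2 NR2 : {fset nat}.
Hypotheses (Hs : fsubset sig1 sig2) (HC : fsubset NC1 NC2) (HR : fsubset NR1 NR2).

Definition restrictW (w : world sig2 NC2 NR2) : world sig1 NC1 NR1 :=
  @World sig1 NC1 NR1 (dom w) (dom_elt w) (fun a => cext w (CName (val a)))
    (fun s x y => if (insub (val s) : option NR2) is Some t then rint t x y else False)
    (res sig1 (wval w)).

Definition extendW (w : world sig1 NC1 NR1) (v : {ffun sig2 -> bool}) : world sig2 NC2 NR2 :=
  @World sig2 NC2 NR2 (dom w) (dom_elt w) (fun a => cext w (CName (val a)))
    (fun t x y => if (insub (val t) : option NR1) is Some s then rint s x y else False)
    v.

Lemma cext_restrict w C : concept_over NC1 NR1 C -> cext (restrictW w) C = cext w C.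
Proof.
rewrite /concept_over; elim: C => [A|C IH|C IHC D IHD|r C IH] /=.
- rewrite andbT => /andP[AN _]; case: insubP => [a _ <-//|]; by rewrite AN.
- by move=> /IH ->.
- by rewrite !all_cat => /andP[/andP[h1 h2] /andP[h3 h4]]; rewrite IHC ?h1 ?h3 // IHD ?h2 ?h4.
- move=> /andP[h1 /andP[rN h2]]; rewrite IH ?h1 ?h2 //.
  case: insubP => [s _ <-|]; last by rewrite rN.
  case: insubP => [t _ _ //|]; by rewrite (fsubsetP HR _ (valP s)).
Qed.

Lemma cext_extend w v C : concept_over NC1 NR1 C -> cext (extendW w v) C = cext w C.
Proof.
rewrite /concept_over; elim: C => [A|C IH|C IHC D IHD|r C IH] /=.
- rewrite andbT => /andP[AN _]; case: insubP => [a _ <-//|]; by rewrite (fsubsetP HC _ AN).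
- by move=> /IH ->.
- by rewrite !all_cat => /andP[/andP[h1 h2] /andP[h3 h4]]; rewrite IHC ?h1 ?h3 // IHD ?h2 ?h4.
- move=> /andP[h1 /andP[rN h2]]; rewrite IH ?h1 ?h2 //.
  case: insubP => [s _ sE|]; last by rewrite (fsubsetP HR _ rN).
  by rewrite sE; case: insubP => [t _ _ //|]; rewrite rN.
Qed.

Lemma gci_restrict w g : gci_over sig1 NC1 NR1 g -> world_models_gci w g ->
  world_models_gci (restrictW w) g.
Proof.
by move=> /and3P[h1 h2 h3]; rewrite /world_models_gci /= models_res // !cext_restrict.
Qed.

Lemma gci_extend w v g : res sig1 v = wval w -> gci_over sig1 NC1 NR1 g ->
  world_models_gci w g -> world_models_gci (extendW w v) g.
Proof.
move=> Hv /and3P[h1 h2 h3]; rewrite /world_models_gci /= -(models_res v h3) Hv.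
by rewrite !cext_extend.
Qed.

Definition downW (W : alcp R sig2 NC2 NR2) : alcp R sig1 NC1 NR1 :=
  map (fun p => (restrictW p.1, p.2)) W.

Lemma dist_downW W : alcp_dist (downW W) = marg (alcp_dist W).
Proof.
apply: funext => a; rewrite /alcp_dist /marg big_map /=.
rewrite (partition_big (fun p => wval p.1) (fun v => res sig1 v == a)) //.
apply: eq_bigr => v /eqP Hv; apply: eq_bigl => p /=.
by case: (eqVneq (wval p.1) v) => [->|]; rewrite ?Hv ?eqxx ?andbF.
Qed.

Lemma ME_model_down (K : kb R) W : kb_over sig1 NC1 NR1 K ->
  ME_model K W -> ME_model K (downW W).
Proof.
move=> /andP[HK1 HK2] [[Wne [W0 W1]] [HG HME]].
split; [split; [|split]|split].
- by case: W Wne {W0 W1 HG HME}.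
- by move=> p H; case: (In_map H) => q [Hq ->] /=; exact: W0.
- by rewrite /downW big_map.
- move=> p g H Hg; case: (In_map H) => q [Hq ->] /=; apply: gci_restrict.
    exact: all_In HK2 Hg.
  exact: HG.
- rewrite dist_downW. exact: (ME_marg Hs HK1 HME).
Qed.

Lemma Prc_downW W C D kappa : concept_over NC1 NR1 C -> concept_over NC1 NR1 D ->
  form_in sig1 kappa -> Prc (downW W) C D kappa = Prc W C D kappa.
Proof.
move=> hC hD hk; rewrite /Prc !big_map /=.
by congr (_ / _); apply: eq_bigl => p /=; rewrite models_res // !cext_restrict.
Qed.

Definition liftp (p : world sig1 NC1 NR1 * R) : alcp R sig2 NC2 NR2 :=
  [seq (extendW p.1 v, p.2 / (N sig1 sig2)%:R) | v <- enum (fib sig2 (wval p.1))].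

Definition upW (W : alcp R sig1 NC1 NR1) : alcp R sig2 NC2 NR2 := flatten (map liftp W).

Lemma sum_upW W (Pq : world sig2 NC2 NR2 -> bool) (P' : world sig1 NC1 NR1 -> bool) :
  (forall w v, res sig1 v = wval w -> Pq (extendW w v) = P' w) ->
  \sum_(q <- upW W | Pq q.1) q.2 = \sum_(p <- W | P' p.1) p.2.
Proof.
move=> HP; rewrite big_flatten big_map [RHS]big_mkcond; apply: eq_bigr => p _.
rewrite big_map /= big_enum_cond /=.
rewrite (eq_bigl (fun v => (v \in fib sig2 (wval p.1)) && P' p.1)); last first.
  move=> v; case: (boolP (v \in _)) => //= Hv; apply: HP.
  by move: Hv; rewrite inE => /eqP.
case: (P' p.1); last by rewrite big_pred0 // => v; rewrite andbF.
rewrite (eq_bigl (fun v => v \in fib sig2 (wval p.1))); last by move=> v; rewrite andbT.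
rewrite sumr_const /N (card_fib Hs _ (a0 sig1)) -[X in X = _]mulr_natr divfK //.
exact: lt0r_neq0 (NR_gt0 R Hs).
Qed.

Lemma dist_upW W : alcp_dist (upW W) = ext (alcp_dist W).
Proof.
apply: funext => v2; rewrite /alcp_dist /ext big_flatten big_map mulr_suml.
rewrite [RHS]big_mkcond; apply: eq_bigr => p _.
rewrite big_map /= big_enum_cond /=.
case: eqVneq => [E|NE].
  rewrite (big_pred1 v2) // => v /=; rewrite inE /=.
  by case: (eqVneq v v2) => [->|]; rewrite ?andbT ?andbF ?E ?eqxx.
rewrite big_pred0 // => v; rewrite inE /=.
case: (eqVneq v v2) => [->|]; rewrite ?andbT ?andbF //.
by apply/negP => /eqP E; rewrite E eqxx in NE.
Qed.

Lemma ME_model_up (K : kb R) W : kb_over sig1 NC1 NR1 K ->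
  ME_model K W -> ME_model K (upW W).
Proof.
move=> /andP[HK1 HK2] [[Wne [W0 W1]] [HG HME]].
have S1 : \sum_(p <- upW W) p.2 = 1.
  by rewrite (@sum_upW W (fun _ => true) (fun _ => true)).
split; [split; [|split]|split] => //.
- by move=> E; move: S1; rewrite E big_nil => /eqP; rewrite eq_sym oner_eq0.
- move=> q H; case: (In_flatten_map H) => p [Hp H']; case: (In_map H') => v [_ ->] /=.
  by rewrite divr_ge0 ?ler0n // W0.
- move=> q g H Hg; case: (In_flatten_map H) => p [Hp H']; case: (In_map H') => v [Hv ->] /=.
  apply: gci_extend; [| exact: all_In HK2 Hg | exact: HG].
  by move: (In_mem Hv); rewrite mem_enum inE => /eqP.
- rewrite dist_upW; exact: (ME_ext Hs HK1 HME).
Qed.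

Lemma Prc_upW W C D kappa : concept_over NC1 NR1 C -> concept_over NC1 NR1 D ->
  form_in sig1 kappa -> Prc (upW W) C D kappa = Prc W C D kappa.
Proof.
move=> hC hD hk; rewrite /Prc.
rewrite (@sum_upW W (fun w => models (wval w) kappa && `[< (cext w C `<=` cext w D)%classic >])
   (fun w => models (wval w) kappa && `[< (cext w C `<=` cext w D)%classic >])); last first.
  by move=> w v Hv /=; rewrite -(models_res v hk) Hv !cext_extend.
rewrite (@sum_upW W (fun w => models (wval w) kappa) (fun w => models (wval w) kappa)) //.
by move=> w v Hv /=; rewrite -(models_res v hk) Hv.
Qed.

End Worlds.

Theorem theorem7 (R : realType) (sig1 NC1 NR1 sig2 NC2 NR2 : {fset nat}) (K : kb R) :
  kb_over sig1 NC1 NR1 K -> kb_over sig2 NC2 NR2 K ->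
  ME_consistent sig1 NC1 NR1 K -> ME_consistent sig2 NC2 NR2 K ->
  fsubset sig1 sig2 -> fsubset NC1 NC2 -> fsubset NR1 NR2 ->
  forall (C D : concept) (kappa : pform),
    concept_over NC1 NR1 C -> concept_over NC1 NR1 D -> form_in sig1 kappa ->
    belief_lo sig1 NC1 NR1 K C D kappa = belief_lo sig2 NC2 NR2 K C D kappa /\
    belief_hi sig1 NC1 NR1 K C D kappa = belief_hi sig2 NC2 NR2 K C D kappa.
Proof.
move=> HK1 _ _ _ Hs HC HR C D kappa hC hD hk.
have E : belief_values sig1 NC1 NR1 K C D kappa = belief_values sig2 NC2 NR2 K C D kappa.
  apply/seteqP; split => x [W [HW ->]].
    exists (upW sig2 NC2 NR2 W); split; first exact: (ME_model_up Hs HC HR HK1 HW).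
    by rewrite (Prc_upW Hs HC HR).
  exists (downW sig1 NC1 NR1 W); split; first by apply: ME_model_down.
  by rewrite Prc_downW.
by rewrite /belief_lo /belief_hi E.
Qed.
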